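(* Let $\tau_a$ and $\tau_b$ be the endomorphisms of $\{a,b\}^*$ defined by $\tau_a(a)=a$, $\tau_a(b)=ab$ and $\tau_b(a)=ba$, $\tau_b(b)=b$. If $\mathbf{w}$ is an infinite LSP word over $\{a,b\}$ and $f\in\{\tau_a,\tau_b\}$, then $f(\mathbf{w})$ is LSP. Consequently, an infinite word over $\{a,b\}$ is LSP if and only if it is $\{\tau_a,\tau_b\}$-adic.
   Context: A finite word $u$ is a left special factor of a word $w$ if there are distinct letters $x\neq y$ with $xu$ and $yu$ factors of $w$. A word is LSP if every left special factor of it is a prefix of it. For a set $S$ of morphisms, an infinite word $\mathbf{w}$ is $S$-adic if there exist $(f_n)_{n\ge1}$ in $S$ and infinite words $(\mathbf{w}_n)_{n\ge1}$ with $\mathbf{w}_1=\mathbf{w}$ and $\mathbf{w}_n=f_n(\mathbf{w}_{n+1})$ for all $n\ge1$. *)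

(* Defs.v *)
From HB Require Import structures.
From mathcomp Require Import all_boot.
Set Implicit Arguments. Unset Strict Implicit. Unset Printing Implicit Defensive.

Inductive letter := la | lb.

Definition letter_to_bool (x : letter) : bool := if x is lb then true else false.
Definition bool_to_letter (c : bool) : letter := if c then lb else la.
Lemma letter_boolK : cancel letter_to_bool bool_to_letter.
Proof. by case. Qed.
HB.instance Definition _ := Equality.copy letter (can_type letter_boolK).

Definition infword := nat -> letter.

Definition pref (w : infword) (n : nat) : seq letter := mkseq w n.

Definition factor (w : infword) (u : seq letter) : Prop :=
  exists i, u = mkseq (fun j => w (i + j)) (size u).

Definition is_prefix (u : seq letter) (w : infword) : Prop := u = pref w (size u).

Definition left_special (w : infword) (u : seq letter) : Prop :=
  exists x y : letter, x != y /\ factor w (x :: u) /\ factor w (y :: u).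

Definition LSP (w : infword) : Prop :=
  forall u, left_special w u -> is_prefix u w.

Definition morphism := letter -> seq letter.

Definition morph_fin (f : morphism) (u : seq letter) : seq letter := flatten (map f u).

(* Image of an infinite word under a non-erasing morphism: the k-th letter of
   f(w) is the k-th letter of f(w_0 ... w_k) (which has length >= k+1 when
   f is non-erasing). *)
Definition morph_inf (f : morphism) (w : infword) : infword :=
  fun k => nth la (morph_fin f (pref w k.+1)) k.

Definition tau_a : morphism := fun x => match x with la => [:: la] | lb => [:: la; lb] end.
Definition tau_b : morphism := fun x => match x with la => [:: lb; la] | lb => [:: lb] end.

(* S-adic words (indexed from 0 instead of 1). *)
Definition S_adic (S : morphism -> Prop) (w : infword) : Prop :=
  exists (f : nat -> morphism) (ws : nat -> infword),
    (forall n, S (f n)) /\ (forall k, ws 0 k = w k) /\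
    (forall n k, ws n k = morph_inf (f n) (ws n.+1) k).

Definition S_tau : morphism -> Prop := fun f => f = tau_a \/ f = tau_b.

(* Main.v *)
Require Import Defs.
From mathcomp Require Import all_boot.
From mathcomp Require Import zify.
From Stdlib Require Import IndefiniteDescription.
Set Implicit Arguments. Unset Strict Implicit.


Definition shift (w : infword) m : infword := fun j => w (m + j).
Definition ne (f : morphism) := forall x, 0 < size (f x).

Lemma pref_ext w1 w2 n : w1 =1 w2 -> pref w1 n = pref w2 n.
Proof. by move=> e; rewrite /pref (eq_mkseq e). Qed.

Lemma pref_add w m n : pref w (m + n) = pref w m ++ pref (shift w m) n.
Proof.
have e : iota m n = map (addn m) (iota 0 n) by rewrite -iotaDl addn0.
by rewrite /pref /mkseq iotaD map_cat add0n e -map_comp.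
Qed.

Lemma pref1 w : pref w 1 = [:: w 0].
Proof. by []. Qed.

Lemma mf_cat f s t : morph_fin f (s ++ t) = morph_fin f s ++ morph_fin f t.
Proof. by rewrite /morph_fin map_cat flatten_cat. Qed.

Lemma mf_cons f x s : morph_fin f (x :: s) = f x ++ morph_fin f s.
Proof. by []. Qed.

Lemma size_mf f s : ne f -> size s <= size (morph_fin f s).
Proof.
move=> hf; elim: s => //= x s IH; rewrite mf_cons size_cat.
have := hf x; lia.
Qed.

Lemma nth_pref_mono f w m n k : m <= n -> k < size (morph_fin f (pref w m)) ->
  nth la (morph_fin f (pref w n)) k = nth la (morph_fin f (pref w m)) k.
Proof.
move=> hmn hk; rewrite -(subnKC hmn) pref_add mf_cat nth_cat hk //.
Qed.

Lemma L1 f w n k : ne f -> k < size (morph_fin f (pref w n)) ->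
  morph_inf f w k = nth la (morph_fin f (pref w n)) k.
Proof.
move=> hf hk; rewrite /morph_inf.
have hk1 : k < size (morph_fin f (pref w k.+1)).
  by have := size_mf (pref w k.+1) hf; rewrite size_mkseq.
case: (leqP n k.+1) => h.
  by rewrite (@nth_pref_mono f w n k.+1 k h hk).
by rewrite (@nth_pref_mono f w k.+1 n k (ltnW h) hk1).
Qed.

Definition SS f w p := size (morph_fin f (pref w p)).

Lemma block f w p k : ne f -> morph_inf f w (SS f w p + k) = morph_inf f (shift w p) k.
Proof.
move=> hf.
have hs : SS f w p + k < size (morph_fin f (pref w (p + k.+1))).
  rewrite pref_add mf_cat size_cat /SS.
  have := size_mf (pref (shift w p) k.+1) hf; rewrite size_mkseq; lia.
rewrite (L1 hf hs) pref_add mf_cat nth_cat ltnNge leq_addr /= /SS addKn.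
by [].
Qed.

Lemma block_ext f w p : ne f -> shift (morph_inf f w) (SS f w p) =1 morph_inf f (shift w p).
Proof. by move=> hf k; rewrite /shift block. Qed.

Lemma pref_image f w t : ne f -> pref w (size t) = t ->
  pref (morph_inf f w) (size (morph_fin f t)) = morph_fin f t.
Proof.
move=> hf ht; apply: (@eq_from_nth _ la); rewrite ?size_mkseq // => i hi.
rewrite nth_mkseq // (@L1 f w (size t) i hf) ht //.
Qed.

Lemma pref_cons w n : pref w n.+1 = w 0 :: pref (shift w 1) n.
Proof. by rewrite -add1n pref_add. Qed.

Lemma shift_shift w m n : shift (shift w m) n =1 shift w (m + n).
Proof. by move=> j; rewrite /shift addnA. Qed.

Lemma factor_ext w1 w2 u : w1 =1 w2 -> factor w1 u -> factor w2 u.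
Proof. by move=> e [i hi]; exists i; rewrite {1}hi; apply: eq_mkseq => j; rewrite e. Qed.

Lemma ls_ext w1 w2 u : w1 =1 w2 -> left_special w1 u -> left_special w2 u.
Proof.
move=> e [x [y [hxy [h1 h2]]]]; exists x, y; split=> //; split; [exact: factor_ext e h1 | exact: factor_ext e h2].
Qed.

Lemma prefix_ext w1 w2 u : w1 =1 w2 -> is_prefix u w1 -> is_prefix u w2.
Proof. by move=> e; rewrite /is_prefix (pref_ext _ e). Qed.

Lemma mi_ext f w1 w2 : w1 =1 w2 -> morph_inf f w1 =1 morph_inf f w2.
Proof. by move=> e k; rewrite /morph_inf (pref_ext _ e). Qed.

Lemma factorE w u : factor w u <-> exists i, u = pref (shift w i) (size u).
Proof. by []. Qed.

Lemma cat_inj_l (T : eqType) (s1 s2 s3 s4 : seq T) :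
  size s1 = size s3 -> s1 ++ s2 = s3 ++ s4 -> s1 = s3 /\ s2 = s4.
Proof.
move=> hs /eqP; rewrite eqseq_cat ?hs // => /andP[/eqP -> /eqP ->]; by [].
Qed.

Lemma pref_mid w i s1 s2 s3 :
  s1 ++ s2 ++ s3 = pref (shift w i) (size s1 + size s2 + size s3) ->
  s2 = pref (shift w (i + size s1)) (size s2).
Proof.
rewrite -addnA pref_add pref_add => h.
have [_ h'] := cat_inj_l (esym (size_mkseq _ _)) h.
have [h'' _] := cat_inj_l (esym (size_mkseq _ _)) h'.
rewrite {1}h''; apply: pref_ext; exact: shift_shift.
Qed.


Lemma ne_ta : ne tau_a. Proof. by case. Qed.
Lemma ne_tb : ne tau_b. Proof. by case. Qed.

Lemma SS_succ f w p : SS f w p.+1 = SS f w p + size (f (w p)).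
Proof. by rewrite /SS -addn1 pref_add mf_cat size_cat pref1 /shift addn0 /morph_fin /= cats0. Qed.

Lemma SS0 f w : SS f w 0 = 0. Proof. by []. Qed.

Lemma SS_ge f w p : ne f -> p <= SS f w p.
Proof. by move=> hf; have := size_mf (pref w p) hf; rewrite size_mkseq. Qed.

Lemma mi_first f w k : ne f -> k < size (f (w 0)) -> morph_inf f w k = nth la (f (w 0)) k.
Proof.
move=> hf hk; rewrite (@L1 f w 1 k hf) pref1 /morph_fin /= ?cats0 //.
Qed.

Notation ta := tau_a.
Notation Sa := (SS tau_a).

Lemma blockA w p k : morph_inf ta w (Sa w p + k) = morph_inf ta (shift w p) k.
Proof. exact: (@block ta w p k ne_ta). Qed.

Lemma firstA w k : k < size (ta (w 0)) -> morph_inf ta w k = nth la (ta (w 0)) k.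
Proof. exact: (@mi_first ta w k ne_ta). Qed.

Lemma ta_start w p : morph_inf ta w (Sa w p) = la.
Proof.
rewrite -[Sa w p]addn0 blockA firstA /shift addn0; by case: (w p).
Qed.

Lemma ta_second w p : w p = lb -> morph_inf ta w (Sa w p).+1 = lb.
Proof.
move=> hp; rewrite -addn1 blockA firstA /shift addn0 hp //.
Qed.

Lemma ta_last w p : morph_inf ta w (Sa w p.+1).-1 = w p.
Proof.
rewrite SS_succ; case hp: (w p) => /=.
  by rewrite addn1 /= ta_start.
by rewrite addn2 /= ta_second.
Qed.

Lemma decompose w i : exists p, i = Sa w p \/ (i = (Sa w p).+1 /\ w p = lb).
Proof.
elim: i => [|i [p [->|[-> hp]]]]; first by exists 0; left.
  case hp: (w p).
    by exists p.+1; left; rewrite SS_succ hp addn1.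
  by exists p; right.
by exists p.+1; left; rewrite SS_succ hp addn2.
Qed.

Lemma no_bb w i : morph_inf ta w i = lb -> morph_inf ta w i.+1 = lb -> False.
Proof.
have [p [->|[-> hp]]] := decompose w i; first by rewrite ta_start.
move=> _; have : (Sa w p).+2 = Sa w p.+1 by rewrite SS_succ hp addn2.
by move=> ->; rewrite ta_start.
Qed.

Fixpoint decA (u : seq letter) : seq letter :=
  match u with
  | [::] => [::]
  | la :: r => match r with
               | [::] => [::]
               | lb :: r' => lb :: decA r'
               | la :: _ => la :: decA r
               end
  | lb :: r => decA r
  end.

Definition tailA (u : seq letter) : seq letter :=
  if last lb u is la then [:: la] else [::].

Lemma size_decA u : size (decA u) + (u != [::]) <= size u.
Proof.
move: {2}(size u) (leqnn (size u)) => n; elim: n u => [|n IH] [|x r] //=.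
case: x => /=; last by move=> h; have := IH r; case: r h => //= *; lia.
case: r => [|y r] //=; case: y => /= h.
  by have := IH (la :: r) h; rewrite /=; lia.
have := IH r; case: r h => //= *; lia.
Qed.

Lemma decA_enc t : decA (morph_fin ta t ++ [:: la]) = t.
Proof.
elim: t => //= x t IH; case: x => /=.
  by move: IH; case: t => //= y t; case: y => //= ->.
by rewrite IH.
Qed.

Lemma pref_consE (v : infword) x r : x :: r = pref v (size (x :: r)) ->
  x = v 0 /\ r = pref (shift v 1) (size r).
Proof. by rewrite /= pref_cons => -[hx hr]; split. Qed.

Lemma lemE n : forall u w, size u <= n -> u = pref (morph_inf ta w) (size u) ->
  decA u = pref w (size (decA u)) /\ u = morph_fin ta (decA u) ++ tailA u.
Proof.
elim: n => [|n IH] [|x r] w //= hs hu.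
have [hx hr] := pref_consE hu.
have hs1 : Sa w 1 = size (ta (w 0)) by rewrite SS_succ.
have h0 : morph_inf ta w 0 = la by rewrite -(SS0 ta w) ta_start.
case: x hx hu => hx hu; last by rewrite h0 in hx.
case: r hr hs hu => [|y r] hr hs hu; first by [].
have [hy hr'] := pref_consE hr.
case: y hy hr' hr hu hs => hy hr' hr hu hs.
-
  have hw0 : w 0 = la.
    case hw: (w 0) => //; move: hy; rewrite /shift add1n.
    have := @ta_second w 0 hw; rewrite SS0 => ->; by [].
  have e1 : shift (morph_inf ta w) 1 =1 morph_inf ta (shift w 1).
    by move=> k; rewrite /shift -blockA hs1 hw0.
  have hr2 : la :: r = pref (morph_inf ta (shift w 1)) (size (la :: r)).
    by rewrite {1}hr; apply: pref_ext.
  have := IH (la :: r) (shift w 1) _ hr2; case.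
    by move: hs; rewrite /=; lia.
  move=> h1 h2; split.
    by rewrite /= pref_cons hw0 -h1.
  rewrite /= {1}h2 /tailA /=; by [].
-
  have hw0 : w 0 = lb.
    case hw: (w 0) => //; move: hy; rewrite /shift add1n.
    have := ta_start w 1; rewrite hs1 hw /= => ->; by [].
  have e1 : shift (morph_inf ta w) 2 =1 morph_inf ta (shift w 1).
    by move=> k; rewrite /shift -blockA hs1 hw0.
  have hr3 : r = pref (morph_inf ta (shift w 1)) (size r).
    rewrite {1}hr'; rewrite (pref_ext _ (shift_shift _ _ _)); exact: pref_ext.
  have := IH r (shift w 1) _ hr3; case.
    by move: hs; rewrite /=; lia.
  move=> h1 h2; split.
    by rewrite /= pref_cons hw0 -h1.
  rewrite /= {1}h2 /tailA /=; case: r {hr hr' hu hs hr3 h1 h2} => //.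
Qed.



Lemma prefS_shift (v : infword) i c u : c :: u = pref (shift v i) (size u).+1 ->
  c = v i /\ u = pref (shift v i.+1) (size u).
Proof.
move=> h; have [hc hu] := @pref_consE (shift v i) c u h.
split; first by rewrite hc /shift addn0.
by rewrite {1}hu (pref_ext _ (shift_shift _ _ _)) addn1.
Qed.

Lemma occA w i c u' : let u := la :: u' in
  c :: u = pref (shift (morph_inf ta w) i) (size u).+1 ->
  exists p, 0 < p /\ w p.-1 = c /\ u = pref (morph_inf ta (shift w p)) (size u).
Proof.
move=> u h; have [hc hu] := prefS_shift h.
have [h0 _] := @pref_consE (shift (morph_inf ta w) i.+1) la u' hu.
have [p [hp|[hp hb]]] := decompose w i.+1; last first.
  by move: h0; rewrite /shift addn0 hp ta_second.
case: p hp => [|p] hp; first by rewrite SS0 in hp.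
exists p.+1; split=> //; split.
  by rewrite hc -ta_last -hp.
rewrite {1}hu hp; apply: pref_ext => k; exact: blockA.
Qed.

Lemma C2A w u : left_special (morph_inf ta w) u -> u <> [::] ->
  left_special w (decA u) /\ (is_prefix (decA u) w -> is_prefix u (morph_inf ta w)).
Proof.
move=> [x [y [hxy [[i hi] [j hj]]]]] hne.
case: u hi hj hne => [|z u'] // hi hj _.
case: z hi hj => hi hj; last first.
  have hbb : forall c k, c = lb -> c :: lb :: u' = pref (shift (morph_inf ta w) k) (size (lb :: u')).+1 -> False.
    move=> c k -> h; have [h1 h2] := prefS_shift h.
    have [h3 _] := @pref_consE (shift (morph_inf ta w) k.+1) lb u' h2.
    apply: (@no_bb w k); [by rewrite -h1 | by move: h3; rewrite /shift addn0 => <-].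
  case: x y hxy hi hj => [] [] //= _ hi hj.
    by case: (hbb _ _ erefl hj).
  by case: (hbb _ _ erefl hi).
have [p [hp [hx hu]]] := occA hi.
have [q [hq [hy hu2]]] := occA hj.
have [e1 e2] := lemE (leqnn _) hu.
have [e3 _] := lemE (leqnn _) hu2.
set t := decA (la :: u') in e1 e2 e3 *.
split.
  exists x, y; split=> //; split.
    exists p.-1; change (x :: t = pref (shift w p.-1) (size t).+1); rewrite pref_cons /shift addn0 hx; congr (_ :: _).
    rewrite {1}e1; apply: pref_ext => k; rewrite /shift addnA addn1 prednK //.
  exists q.-1; change (y :: t = pref (shift w q.-1) (size t).+1); rewrite pref_cons /shift addn0 hy; congr (_ :: _).
  rewrite {1}e3; apply: pref_ext => k; rewrite /shift addnA addn1 prednK //.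
move=> hpre; rewrite /is_prefix.
have -> : size (la :: u') = size (morph_fin ta t ++ tailA (la :: u')) by rewrite -e2.
rewrite {1}e2 size_cat pref_add.
have hst : size (morph_fin ta t) = Sa w (size t) by rewrite /SS -hpre.
rewrite (pref_image ne_ta (esym hpre)); congr (_ ++ _).
rewrite /tailA; case: (last lb (la :: u')) => //.
rewrite pref1 /shift addn0 hst ta_start //.
Qed.

Lemma mf_split c t z : morph_fin ta ([:: c] ++ t ++ [:: z]) =
  (if c is lb then [:: la] else [::]) ++ (c :: morph_fin ta t ++ [:: la]) ++
  (if z is lb then [:: lb] else [::]).
Proof. by rewrite !mf_cat; case: c; case: z => /=; rewrite -?catA. Qed.

Lemma C3A w : LSP (morph_inf ta w) -> LSP w.
Proof.
move=> hL t [x [y [hxy [[i hi] [j hj]]]]].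
have key : forall c k, c :: t = pref (shift w k) (size (c :: t)) ->
    factor (morph_inf ta w) (c :: morph_fin ta t ++ [:: la]).
  move=> c k h.
  set z := w (k + (size t).+1).
  have ht' : pref (shift w k) (size ([:: c] ++ t ++ [:: z])) = [:: c] ++ t ++ [:: z].
    rewrite size_cat size_cat /= addnA add1n pref_add -h; congr (_ ++ _).
    by rewrite pref1 /shift addn0 /z.
  have := pref_image ne_ta ht'.
  rewrite (pref_ext _ (fun k0 => esym (blockA w k k0))) mf_split.
  set s1 := (if c is lb then _ else _); set s2 := (c :: _); set s3 := (if z is lb then _ else _).
  rewrite !size_cat addnA => hh.
  have hh' : s1 ++ s2 ++ s3 = pref (shift (morph_inf ta w) (Sa w k)) (size s1 + size s2 + size s3).
    rewrite -hh; apply: pref_ext => k0; by [].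
  exists (Sa w k + size s1); exact: pref_mid hh'.
have hls : left_special (morph_inf ta w) (morph_fin ta t ++ [:: la]).
  by exists x, y; split=> //; split; [exact: key hi | exact: key hj].
have hp := hL _ hls.
have [e1 _] := lemE (leqnn _) hp.
by move: e1; rewrite decA_enc.
Qed.



Definition sw (x : letter) := if x is la then lb else la.
Lemma swK : involutive sw. Proof. by case. Qed.
Definition sww (w : infword) : infword := fun k => sw (w k).
Lemma swwK w : sww (sww w) =1 w. Proof. by move=> k; rewrite /sww swK. Qed.
Lemma map_swK u : map sw (map sw u) = u.
Proof. by rewrite -map_comp (eq_map swK) map_id. Qed.

Lemma pref_sww w n : pref (sww w) n = map sw (pref w n).
Proof. by rewrite /pref /mkseq -map_comp. Qed.

Lemma mf_sw s : morph_fin ta (map sw s) = map sw (morph_fin tau_b s).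
Proof. by elim: s => //= x s IH; rewrite !mf_cons IH map_cat; case: x. Qed.

Lemma mi_tb w k : morph_inf tau_b w k = sw (morph_inf ta (sww w) k).
Proof.
rewrite /morph_inf pref_sww mf_sw.
have hs : k < size (morph_fin tau_b (pref w k.+1)).
  by have := size_mf (pref w k.+1) ne_tb; rewrite size_mkseq.
by rewrite (nth_map la) // swK.
Qed.

Lemma factor_sw v u : factor (sww v) u -> factor v (map sw u).
Proof.
move=> [i hi]; exists i; rewrite size_map {1}hi.
change (map sw (pref (sww (shift v i)) (size u)) = pref (shift v i) (size u)).
by rewrite pref_sww map_swK.
Qed.

Lemma LS_sw v u : left_special (sww v) u -> left_special v (map sw u).
Proof.
move=> [x [y [hxy [h1 h2]]]]; exists (sw x), (sw y); split.
  by case: x y hxy {h1 h2} => [] [].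
by split; [exact: (factor_sw h1) | exact: (factor_sw h2)].
Qed.

Lemma PF_sw s v : is_prefix s v -> is_prefix (map sw s) (sww v).
Proof. by rewrite /is_prefix size_map pref_sww => {1}->. Qed.

Lemma LSP_sw v : LSP v -> LSP (sww v).
Proof.
move=> hL u /LS_sw /hL /PF_sw; by rewrite map_swK.
Qed.

Lemma C2 f w u : S_tau f -> left_special (morph_inf f w) u -> u <> [::] ->
  exists u', size u' < size u /\ left_special w u' /\
     (is_prefix u' w -> is_prefix u (morph_inf f w)).
Proof.
have hsz : forall u, u <> [::] -> size (decA u) < size u.
  by move=> v hv; have := size_decA v; case: v hv => //= *; lia.
case=> ->.
  move=> hls hne; have [h1 h2] := C2A hls hne.
  by exists (decA u); split; [exact: hsz|split].
move=> hls hne.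
have e : morph_inf tau_b w =1 sww (morph_inf ta (sww w)) by move=> k; rewrite mi_tb.
have hls1 := LS_sw (ls_ext e hls).
have hne1 : map sw u <> [::] by case: u hne {hls hls1}.
have [h1 h2] := C2A hls1 hne1.
exists (map sw (decA (map sw u))); split.
  rewrite size_map; have h := hsz _ hne1; rewrite size_map in h; exact h.
split.
  exact: LS_sw h1.
move=> /PF_sw; rewrite map_swK => /h2 /PF_sw; rewrite map_swK => h.
exact: prefix_ext (fun k => esym (e k)) h.
Qed.

Lemma C2_LSP f w : S_tau f -> LSP w -> LSP (morph_inf f w).
Proof.
move=> hf hL u hu; case: u hu => [|x r] hu; first by [].
have [u' [_ [h1 h2]]] := C2 hf hu (fun e : x :: r = [::] => ltac:(discriminate e)).
by apply: h2; apply: hL.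
Qed.



Section Desub.
Variable w : infword.
Hypothesis hL : LSP w.
Hypothesis h0 : w 0 = la.

Lemma first_ab k : w k = lb -> exists j, w j = la /\ w j.+1 = lb.
Proof.
elim: k => [|k IH] hk; first by rewrite h0 in hk.
case hw: (w k); first by exists k.
exact: IH.
Qed.

Lemma nobb k : w k = lb -> w k.+1 = lb -> False.
Proof.
move=> h1 h2; have [j [hj1 hj2]] := first_ab h1.
have hls : left_special w [:: lb].
  exists la, lb; split=> //; split.
    exists j; rewrite /= /mkseq /= addn0 addn1 hj1 hj2 //.
  exists k; rewrite /= /mkseq /= addn0 addn1 h1 h2 //.
have := hL hls; rewrite /is_prefix /pref /mkseq /= h0 //.
Qed.

Fixpoint pos n := match n with 0 => 0 | n'.+1 => pos n' + (if w (pos n').+1 is lb then 2 else 1) end.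
Definition w' : infword := fun p => w (pos p).+1.

Lemma pos_la p : w (pos p) = la.
Proof.
elim: p => [|p IH] //=.
case hw: (w (pos p).+1); first by rewrite addn1.
rewrite addn2; case hw2: (w (pos p).+2) => //.
by case: (nobb hw hw2).
Qed.

Lemma Sa_pos p : Sa w' p = pos p.
Proof.
elim: p => [|p IH] //=; rewrite SS_succ IH /w'.
by case: (w (pos p).+1).
Qed.

Lemma desub_eq : w =1 morph_inf ta w'.
Proof.
move=> i; have [p [->|[-> hp]]] := decompose w' i.
  by rewrite ta_start Sa_pos pos_la.
by rewrite ta_second // -hp Sa_pos.
Qed.

Lemma desubA : exists v, LSP v /\ w =1 morph_inf ta v.
Proof.
exists w'; split; last exact: desub_eq.
apply: C3A => u hu; apply: (prefix_ext desub_eq); apply: hL.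
exact: ls_ext (fun k => esym (desub_eq k)) hu.
Qed.
End Desub.

Lemma desub w : LSP w -> exists fv : morphism * infword,
  S_tau fv.1 /\ LSP fv.2 /\ w =1 morph_inf fv.1 fv.2.
Proof.
move=> hL; case h0: (w 0).
  have [v [hv e]] := desubA hL h0.
  by exists (ta, v); split; [left|split].
have hL' := LSP_sw hL.
have h0' : sww w 0 = la by rewrite /sww h0.
have [v [hv e]] := desubA hL' h0'.
exists (tau_b, sww v); split; first by right.
split; first exact: LSP_sw.
move=> k /=; rewrite mi_tb -(mi_ext ta (fun j => esym (swwK v j))) -e /sww swK //.
Qed.

Theorem proposition2 :
  (forall (w : infword) (f : morphism), LSP w -> S_tau f -> LSP (morph_inf f w)) /\
  (forall w : infword, LSP w <-> S_adic S_tau w).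
Proof.
split; first by move=> w f hL hf; exact: C2_LSP.
move=> w; split.
  move=> hL.
  pose T := {v : infword | LSP v}.
  have step : forall x : T, {fv : morphism * T | S_tau fv.1 /\ proj1_sig x =1 morph_inf fv.1 (proj1_sig fv.2)}.
    move=> [v hv]; apply: constructive_indefinite_description.
    have [[f v'] [hf [hv' e]]] := desub hv.
    by exists (f, exist _ v' hv').
  pose X := fix X n := match n with 0 => exist _ w hL : T | n'.+1 => (proj1_sig (step (X n'))).2 end.
  exists (fun n => (proj1_sig (step (X n))).1), (fun n => proj1_sig (X n)).
  split; first by move=> n; case: (proj2_sig (step (X n))).
  split; first by [].
  by move=> n k; case: (proj2_sig (step (X n))) => _ ->.
move=> [f [ws [hf [h0 hs]]]].
have key : forall m n u, size u <= m -> left_special (ws n) u -> is_prefix u (ws n).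
  elim=> [|m IH] n [|x r] //= hm hu.
  have e : ws n =1 morph_inf (f n) (ws n.+1) by move=> k; exact: hs.
  have hu' := ls_ext e hu.
  have [u' [hsz [h1 h2]]] := C2 (hf n) hu' (fun e : x :: r = [::] => ltac:(discriminate e)).
  apply: (prefix_ext (fun k => esym (e k))); apply: h2; apply: (IH n.+1) => //.
  by move: hsz hm => /=; lia.
move=> u hu; apply: (prefix_ext h0); apply: (key (size u) 0) => //.
exact: ls_ext (fun k => esym (h0 k)) hu.
Qed.
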